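(* Let $U=(u_{ij})\in\mathcal{U}_d(\mathbb{C})$ and let $R_U=(r_{ij})$ be a real matrix with non-negative entries such that $r_{ij}=0$ iff $u_{ij}=0$ and $r_{ij}>0$ otherwise. Then there exist $D_1,D_2\in\mathcal{DU}_d(\mathbb{C})$ such that for all $k,l\in\{1,\dots,d\}$, $$(R_U^TR_U)_{kl}=0\iff (D_1U^\dagger D_2U)_{kl}=0.$$
   Context: $\mathcal{U}_d(\mathbb{C})$ denotes the group of $d\times d$ unitary matrices and $\mathcal{DU}_d(\mathbb{C})$ its subgroup of diagonal unitary matrices. *)

(* Defs.v *)
From HB Require Import structures.
From mathcomp Require Import all_boot all_order all_algebra.
From mathcomp Require Import complex.
From mathcomp Require Import reals.
Set Implicit Arguments. Unset Strict Implicit. Unset Printing Implicit Defensive.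
Import Order.TTheory GRing.Theory Num.Theory.
Local Open Scope ring_scope.

Definition adjmx (R : realType) (d : nat) (U : 'M[R[i]]_d) : 'M[R[i]]_d :=
  (map_mx Num.conj U)^T.

Definition unitary_mx (R : realType) (d : nat) (U : 'M[R[i]]_d) : Prop :=
  U *m adjmx U = 1%:M /\ adjmx U *m U = 1%:M.

Definition diag_unitary_mx (R : realType) (d : nat) (D : 'M[R[i]]_d) : Prop :=
  is_diag_mx D /\ unitary_mx D.

(* Main.v *)
Require Import Defs.
From HB Require Import structures.
From mathcomp Require Import all_boot all_order all_algebra.
From mathcomp Require Import complex.
From mathcomp Require Import reals.
From mathcomp Require Import ring lra.
Import Order.TTheory GRing.Theory Num.Theory.
Local Open Scope ring_scope.


Local Open Scope complex_scope.
Lemma conjE (R : realType) (a b : R) : Num.conj (a +i* b) = a -i* b.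
Proof. by []. Qed.

Definition zc (R : realType) (n : nat) : R[i] :=
  ((1 - n%:R^+2)/(1+n%:R^+2)) +i* (2 * n%:R/(1+n%:R^+2)).

Lemma zc_unit (R : realType) n : zc R n * Num.conj (zc R n) = 1.
Proof.
rewrite /zc conjE /=.
have h : (1 + n%:R^+2 : R) != 0 by rewrite gt_eqF // ltr_pwDl // sqr_ge0.
apply/eqP; rewrite eq_complex /=; apply/andP; split; apply/eqP; field => //.
Qed.

Lemma zc_inj (R : realType) : injective (zc R).
Proof.
move=> m n [].
have hm : (1 + m%:R^+2 : R) != 0 by rewrite gt_eqF // ltr_pwDl // sqr_ge0.
have hn : (1 + n%:R^+2 : R) != 0 by rewrite gt_eqF // ltr_pwDl // sqr_ge0.
move=> /eqP; rewrite eqr_div // => /eqP E _.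
have : (m%:R^+2 : R) = n%:R^+2 by nra.
rewrite -!natrX => /eqP; rewrite eqr_nat => /eqP.
by move=> H; apply/eqP; rewrite -(eqn_exp2r _ _ (isT : 0 < 2)%N) H.
Qed.
Local Close Scope complex_scope.

Lemma exists_unit_nonroot (R : realType) (P : {poly R[i]}) : P != 0 ->
  exists z : R[i], z * Num.conj z = 1 /\ P.[z] != 0.
Proof.
move=> P0.
have := max_poly_roots P0 (rs := [seq zc R n | n <- iota 0 (size P)]).
rewrite size_map size_iota ltnn map_inj_uniq ?iota_uniq; last exact: zc_inj.
move=> H.
have [x xin nr] : exists2 x, x \in [seq zc R n | n <- iota 0 (size P)] & ~~ root P x.
  by apply/hasP; rewrite has_predC; apply/negP => a; move: (H a isT).
case/mapP: xin => n _ E; subst x; exists (zc R n); split; first exact: zc_unit.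
by [].
Qed.

Lemma diag_unitary (R : realType) d (w : 'rV[R[i]]_d) :
  (forall j, w 0 j * Num.conj (w 0 j) = 1) -> diag_unitary_mx (diag_mx w).
Proof.
move=> Hw; split; first exact: diag_mx_is_diag.
have E : adjmx (diag_mx w) = diag_mx (map_mx Num.conj w).
  apply/matrixP => i j; rewrite /adjmx !mxE eq_sym.
  by case: eqP => [->|_]; rewrite ?mulr1n ?mulr0n ?rmorph0.
rewrite /unitary_mx E; split; rewrite mul_diag_mx; apply/matrixP => i j; rewrite !mxE;
  case: eqVneq => [->|]; rewrite ?mulr1n ?mulr0n ?mulr0 //.
by rewrite mulrC Hw.
Qed.

Theorem corollary23 (R : realType) (d : nat) (U : 'M[R[i]]_d) (RU : 'M[R]_d) :
  unitary_mx U ->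
  (forall i j, 0 <= RU i j) ->
  (forall i j, RU i j = 0 <-> U i j = 0) ->
  (forall i j, U i j != 0 -> 0 < RU i j) ->
  exists D1 D2 : 'M[R[i]]_d,
    diag_unitary_mx D1 /\ diag_unitary_mx D2 /\
    forall k l : 'I_d,
      (RU^T *m RU) k l = 0 <-> (D1 *m adjmx U *m D2 *m U) k l = 0.
Proof.
move=> _ Hpos Hiff _.
pose c (k l j : 'I_d) := Num.conj (U j k) * U j l.
have Hc : forall k l j, (c k l j == 0) = (RU j k * RU j l == 0).
  move=> k l j; rewrite /c !mulf_eq0 conjC_eq0.
  have e : forall a b, (RU a b == 0) = (U a b == 0).
    by move=> a b; apply/eqP/eqP => /Hiff.
  by rewrite !e.
have HR : forall k l, ((RU^T *m RU) k l == 0) = [forall j, c k l j == 0].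
  move=> k l; rewrite mxE psumr_eq0; last by move=> j _; rewrite mxE mulr_ge0.
  apply/allP/forallP => H j.
    by rewrite Hc; have := H j (mem_index_enum j); rewrite mxE.
  by move=> _; rewrite mxE -Hc H.
pose p (k l : 'I_d) : {poly R[i]} := \sum_(j < d) (c k l j)%:P * 'X^j.
have Hp : forall k l, (p k l == 0) = [forall j, c k l j == 0].
  move=> k l; apply/eqP/forallP => [H j|H].
    have := congr1 (fun q : {poly R[i]} => q`_j) H; rewrite /= coef0 coef_sum => <-.
    rewrite (bigD1 j) //= coefCM coefXn eqxx mulr1 big1 ?addr0 //.
    by move=> i ne; rewrite coefCM coefXn; case: eqP => [/val_inj/esym/eqP|]; rewrite ?(negbTE ne) ?mulr0.
  by rewrite /p big1 // => j _; rewrite (eqP (H j)) mul0r.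
pose P := \prod_(k < d) \prod_(l < d) (if p k l == 0 then 1 else p k l).
have P0 : P != 0.
  apply/prodf_neq0 => k _; apply/prodf_neq0 => l _.
  by case: ifP => [_|/negbT //]; rewrite oner_eq0.
have [z [zu Pz]] := @exists_unit_nonroot R P P0.
have Hpz : forall k l, p k l != 0 -> (p k l).[z] != 0.
  move=> k l pn; move: Pz; rewrite /P horner_prod.
  move/prodf_neq0 => /(_ k isT); rewrite horner_prod.
  by move/prodf_neq0 => /(_ l isT); rewrite (negbTE pn).
exists (diag_mx (const_mx 1)), (diag_mx (\row_j z ^+ j)).
split; first by apply: (@diag_unitary R) => j; rewrite mxE rmorph1 mulr1.
split; first by apply: (@diag_unitary R) => j; rewrite mxE rmorphXn -exprMn zu expr1n.
have Hent : forall k l, (diag_mx (const_mx 1) *m adjmx U *m diag_mx (\row_j z ^+ j) *m U) k l = (p k l).[z].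
  move=> k l; rewrite diag_const_mx mul1mx mul_mx_diag !mxE /p horner_sum.
  apply: eq_bigr => j _; rewrite !mxE hornerM hornerC hornerXn /c /adjmx. by rewrite mulrAC.
move=> k l; rewrite Hent; split.
  move/eqP; rewrite HR -Hp => /eqP ->; by rewrite horner0.
move=> /eqP pz; apply/eqP; rewrite HR -Hp; apply: contraLR pz; exact: Hpz.
Qed.
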